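(* A double functor $F\colon\mathbb{A}\to\mathbb{B}$ is a cofibration in the model structure on $\mathrm{DblCat}$ right-induced along $(\mathbf{H},\mathcal{V})$ from two copies of the Lack model structure if and only if (i) the functor $U\mathbf{H}F\colon U\mathbf{H}\mathbb{A}\to U\mathbf{H}\mathbb{B}$ has the left lifting property with respect to all functors that are surjective on objects and full, and (ii) the functor $U\mathbf{V}F\colon U\mathbf{V}\mathbb{A}\to U\mathbf{V}\mathbb{B}$ has the left lifting property with respect to all functors that are surjective on objects and surjective on morphisms.
   Context: The model structure on $\mathrm{DblCat}$ (double categories and strict double functors) in question has weak equivalences the double functors $F$ with $\mathbf{H}F$ and $\mathcal{V}F$ biequivalences, fibrations those with $\mathbf{H}F$ and $\mathcal{V}F$ Lack fibrations, and cofibrations those with the left lifting property against trivial fibrations; the trivial fibrations are exactly the double functors $F$ that are surjective on objects, full on horizontal morphisms (every horizontal $b\colon FA\to FC$ is $Fa$ for some $a\colon A\to C$), surjective on vertical morphisms, and fully faithful on squares (every square $(Fu\,{}^{Fa}_{Fc}\,Fu')$ is $F\alpha$ for a unique $\alpha\colon(u\,{}^{a}_{c}\,u')$). Here $\mathbf{H}\mathbb{A}$ is the underlying horizontal 2-category of $\mathbb{A}$ and $\mathcal{V}\mathbb{A}$ the 2-category of vertical morphisms and squares. $U\colon 2\mathrm{Cat}\to\mathrm{Cat}$ takes underlying categories; $U\mathbf{H}\mathbb{A}$ is the category of objects and horizontal morphisms of $\mathbb{A}$ and $U\mathbf{V}\mathbb{A}$ the category of objects and vertical morphisms of $\mathbb{A}$.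 *)

(* Defs.v *)
Definition sq_cast {O : Type} {H V : O -> O -> Type}
  (S : forall A B C D : O, V A C -> V B D -> H A B -> H C D -> Type)
  {A B C D : O} {u u1 : V A C} {u' u1' : V B D} {a a1 : H A B} {c c1 : H C D}
  (e1 : u = u1) (e2 : u' = u1') (e3 : a = a1) (e4 : c = c1)
  (s : S A B C D u u' a c) : S A B C D u1 u1' a1 c1 :=
  match e4 in _ = z return S A B C D u1 u1' a1 z with eq_refl =>
  match e3 in _ = y return S A B C D u1 u1' y c with eq_refl =>
  match e2 in _ = x return S A B C D u1 x a c with eq_refl =>
  match e1 in _ = w return S A B C D w u' a c with eq_refl => s end end end end.

(** Strict double categories.  [sq u u' a c] is a square with left vertical
    boundary [u], right [u'], top horizontal [a], bottom [c]:
        A --a--> B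
        u        u'
        C --c--> D                                                           *)
Record DblCat := {
  dob : Type;
  hom_h : dob -> dob -> Type;
  hom_v : dob -> dob -> Type;
  sq : forall {A B C D : dob}, hom_v A C -> hom_v B D -> hom_h A B -> hom_h C D -> Type;
  hid : forall A, hom_h A A;
  hcomp : forall {A B C}, hom_h A B -> hom_h B C -> hom_h A C;
  vid : forall A, hom_v A A;
  vcomp : forall {A B C}, hom_v A B -> hom_v B C -> hom_v A C;
  hcompS : forall {A B C D E F} {u : hom_v A D} {u' : hom_v B E} {u'' : hom_v C F}
      {a : hom_h A B} {b : hom_h B C} {c : hom_h D E} {d : hom_h E F},
      sq u u' a c -> sq u' u'' b d -> sq u u'' (hcomp a b) (hcomp c d);
  vcompS : forall {A B C D E F} {u : hom_v A C} {u' : hom_v B D} {v : hom_v C E}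
      {v' : hom_v D F} {a : hom_h A B} {c : hom_h C D} {e : hom_h E F},
      sq u u' a c -> sq v v' c e -> sq (vcomp u v) (vcomp u' v') a e;
  idH : forall {A B} (a : hom_h A B), sq (vid A) (vid B) a a;
  idV : forall {A C} (u : hom_v A C), sq u u (hid A) (hid C);
  hassoc : forall A B C D (a : hom_h A B) (b : hom_h B C) (c : hom_h C D),
      hcomp (hcomp a b) c = hcomp a (hcomp b c);
  hidl : forall A B (a : hom_h A B), hcomp (hid A) a = a;
  hidr : forall A B (a : hom_h A B), hcomp a (hid B) = a;
  vassoc : forall A B C D (u : hom_v A B) (v : hom_v B C) (w : hom_v C D),
      vcomp (vcomp u v) w = vcomp u (vcomp v w);
  vidl : forall A B (u : hom_v A B), vcomp (vid A) u = u;
  vidr : forall A B (u : hom_v A B), vcomp u (vid B) = u;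
  hassocS : forall A B C D A' B' C' D' (u1 : hom_v A A') (u2 : hom_v B B')
      (u3 : hom_v C C') (u4 : hom_v D D') (a : hom_h A B) (b : hom_h B C) (c : hom_h C D)
      (d : hom_h A' B') (e : hom_h B' C') (f : hom_h C' D')
      (al : sq u1 u2 a d) (be : sq u2 u3 b e) (ga : sq u3 u4 c f),
      sq_cast (@sq) eq_refl eq_refl (hassoc _ _ _ _ a b c) (hassoc _ _ _ _ d e f)
        (hcompS (hcompS al be) ga) = hcompS al (hcompS be ga);
  hidlS : forall A B C D (u : hom_v A C) (u' : hom_v B D) (a : hom_h A B) (c : hom_h C D)
      (al : sq u u' a c),
      sq_cast (@sq) eq_refl eq_refl (hidl _ _ a) (hidl _ _ c) (hcompS (idV u) al) = al;
  hidrS : forall A B C D (u : hom_v A C) (u' : hom_v B D) (a : hom_h A B) (c : hom_h C D)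
      (al : sq u u' a c),
      sq_cast (@sq) eq_refl eq_refl (hidr _ _ a) (hidr _ _ c) (hcompS al (idV u')) = al;
  vassocS : forall A B C D E F G H (u : hom_v A C) (u' : hom_v B D) (v : hom_v C E)
      (v' : hom_v D F) (w : hom_v E G) (w' : hom_v F H)
      (a : hom_h A B) (c : hom_h C D) (e : hom_h E F) (g : hom_h G H)
      (al : sq u u' a c) (be : sq v v' c e) (ga : sq w w' e g),
      sq_cast (@sq) (vassoc _ _ _ _ u v w) (vassoc _ _ _ _ u' v' w') eq_refl eq_refl
        (vcompS (vcompS al be) ga) = vcompS al (vcompS be ga);
  vidlS : forall A B C D (u : hom_v A C) (u' : hom_v B D) (a : hom_h A B) (c : hom_h C D)
      (al : sq u u' a c),
      sq_cast (@sq) (vidl _ _ u) (vidl _ _ u') eq_refl eq_refl (vcompS (idH a) al) = al;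
  vidrS : forall A B C D (u : hom_v A C) (u' : hom_v B D) (a : hom_h A B) (c : hom_h C D)
      (al : sq u u' a c),
      sq_cast (@sq) (vidr _ _ u) (vidr _ _ u') eq_refl eq_refl (vcompS al (idH c)) = al;
  interchange : forall A B C D E F G H I
      (u : hom_v A D) (v : hom_v B E) (w : hom_v C F)
      (u' : hom_v D G) (v' : hom_v E H) (w' : hom_v F I)
      (a : hom_h A B) (b : hom_h B C) (c : hom_h D E) (d : hom_h E F)
      (e : hom_h G H) (f : hom_h H I)
      (al : sq u v a c) (be : sq v w b d) (ga : sq u' v' c e) (de : sq v' w' d f),
      vcompS (hcompS al be) (hcompS ga de) = hcompS (vcompS al ga) (vcompS be de);
  idH_hcomp : forall A B C (a : hom_h A B) (b : hom_h B C),
      hcompS (idH a) (idH b) = idH (hcomp a b);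
  idV_vcomp : forall A B C (u : hom_v A B) (v : hom_v B C),
      vcompS (idV u) (idV v) = idV (vcomp u v);
  idV_vid : forall A, idV (vid A) = idH (hid A)
}.


Record DblFunctor (X Y : DblCat) := {
  F0 : dob X -> dob Y;
  Fh : forall {A B}, hom_h X A B -> hom_h Y (F0 A) (F0 B);
  Fv : forall {A B}, hom_v X A B -> hom_v Y (F0 A) (F0 B);
  Fs : forall {A B C D} {u : hom_v X A C} {u' : hom_v X B D} {a : hom_h X A B}
      {c : hom_h X C D}, sq X u u' a c -> sq Y (Fv u) (Fv u') (Fh a) (Fh c);
  Fh_id : forall A, Fh (hid X A) = hid Y (F0 A);
  Fh_comp : forall A B C (a : hom_h X A B) (b : hom_h X B C),
      Fh (hcomp X a b) = hcomp Y (Fh a) (Fh b);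
  Fv_id : forall A, Fv (vid X A) = vid Y (F0 A);
  Fv_comp : forall A B C (u : hom_v X A B) (v : hom_v X B C),
      Fv (vcomp X u v) = vcomp Y (Fv u) (Fv v);
  Fs_hcomp : forall A B C D E F (u : hom_v X A D) (u' : hom_v X B E) (u'' : hom_v X C F)
      (a : hom_h X A B) (b : hom_h X B C) (c : hom_h X D E) (d : hom_h X E F)
      (al : sq X u u' a c) (be : sq X u' u'' b d),
      sq_cast (@sq Y) eq_refl eq_refl (Fh_comp _ _ _ a b) (Fh_comp _ _ _ c d)
        (Fs (hcompS X al be)) = hcompS Y (Fs al) (Fs be);
  Fs_vcomp : forall A B C D E F (u : hom_v X A C) (u' : hom_v X B D) (v : hom_v X C E)
      (v' : hom_v X D F) (a : hom_h X A B) (c : hom_h X C D) (e : hom_h X E F)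
      (al : sq X u u' a c) (be : sq X v v' c e),
      sq_cast (@sq Y) (Fv_comp _ _ _ u v) (Fv_comp _ _ _ u' v') eq_refl eq_refl
        (Fs (vcompS X al be)) = vcompS Y (Fs al) (Fs be);
  Fs_idH : forall A B (a : hom_h X A B),
      sq_cast (@sq Y) (Fv_id A) (Fv_id B) eq_refl eq_refl (Fs (idH X a)) = idH Y (Fh a);
  Fs_idV : forall A C (u : hom_v X A C),
      sq_cast (@sq Y) eq_refl eq_refl (Fh_id A) (Fh_id C) (Fs (idV X u)) = idV Y (Fv u)
}.

Arguments F0 {X Y} _ _.
Arguments Fh {X Y} _ {A B} _.
Arguments Fv {X Y} _ {A B} _.
Arguments Fs {X Y} _ {A B C D u u' a c} _.

(** Equality in these record types is equality of
    morphisms/squares together with their boundaries. *)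
Record HArr (X : DblCat) := mkHArr { ha_s : dob X; ha_t : dob X; ha_m : hom_h X ha_s ha_t }.
Record VArr (X : DblCat) := mkVArr { va_s : dob X; va_t : dob X; va_m : hom_v X va_s va_t }.
Record SqArr (X : DblCat) := mkSqArr {
  s_A : dob X; s_B : dob X; s_C : dob X; s_D : dob X;
  s_u : hom_v X s_A s_C; s_u' : hom_v X s_B s_D;
  s_a : hom_h X s_A s_B; s_c : hom_h X s_C s_D;
  s_sq : sq X s_u s_u' s_a s_c }.

Arguments mkHArr {X ha_s ha_t} _.
Arguments mkVArr {X va_s va_t} _.
Arguments mkSqArr {X s_A s_B s_C s_D s_u s_u' s_a s_c} _.
Arguments ha_m {X} _.
Arguments va_m {X} _.
Arguments s_sq {X} _.

Definition mapH {X Y} (F : DblFunctor X Y) (h : HArr X) : HArr Y :=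
  mkHArr (Fh F (ha_m h)).
Definition mapV {X Y} (F : DblFunctor X Y) (v : VArr X) : VArr Y :=
  mkVArr (Fv F (va_m v)).
Definition mapS {X Y} (F : DblFunctor X Y) (s : SqArr X) : SqArr Y :=
  mkSqArr (Fs F (s_sq s)).

Definition dcomm {X Y Y' Z} (F : DblFunctor X Y) (G : DblFunctor Y Z)
    (H : DblFunctor X Y') (K : DblFunctor Y' Z) : Prop :=
  (forall x, F0 G (F0 F x) = F0 K (F0 H x)) /\
  (forall h, mapH G (mapH F h) = mapH K (mapH H h)) /\
  (forall v, mapV G (mapV F v) = mapV K (mapV H v)) /\
  (forall s, mapS G (mapS F s) = mapS K (mapS H s)).

Definition dtri {X Y Z} (F : DblFunctor X Y) (G : DblFunctor Y Z)
    (H : DblFunctor X Z) : Prop :=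
  (forall x, F0 G (F0 F x) = F0 H x) /\
  (forall h, mapH G (mapH F h) = mapH H h) /\
  (forall v, mapV G (mapV F v) = mapV H v) /\
  (forall s, mapS G (mapS F s) = mapS H s).

Definition dLLP {A B} (i : DblFunctor A B)
    (P : forall C D : DblCat, DblFunctor C D -> Prop) : Prop :=
  forall (C D : DblCat) (p : DblFunctor C D), P C D p ->
  forall (u : DblFunctor A C) (v : DblFunctor B D), dcomm u p i v ->
  exists d : DblFunctor B C, dtri i d u /\ dtri d p v.

(** Trivial fibrations of the model structure on DblCat (as characterized in
    the paper): surjective on objects, full on horizontal morphisms,
    surjective on vertical morphisms, fully faithful on squares. *)
Definition dtriv_fib (C D : DblCat) (P : DblFunctor C D) : Prop :=
  (forall y : dob D, exists x : dob C, F0 P x = y) /\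
  (forall (A C' : dob C) (b : hom_h D (F0 P A) (F0 P C')),
      exists a : hom_h C A C', Fh P a = b) /\
  (forall v : VArr D, exists u : VArr C, mapV P u = v) /\
  (forall (A B0 C' D0 : dob C) (u : hom_v C A C') (u' : hom_v C B0 D0)
      (a : hom_h C A B0) (c : hom_h C C' D0)
      (be : sq D (Fv P u) (Fv P u') (Fh P a) (Fh P c)),
      exists al : sq C u u' a c, Fs P al = be /\
        forall al' : sq C u u' a c, Fs P al' = be -> al' = al).

Definition dcofibration {A B} (F : DblFunctor A B) : Prop := dLLP F dtriv_fib.

Record Cat := {
  cob : Type;
  chom : cob -> cob -> Type;
  cid : forall x, chom x x;
  ccomp : forall {x y z}, chom x y -> chom y z -> chom x z;  (* diagrammatic order *)
  cassoc : forall x y z w (f : chom x y) (g : chom y z) (h : chom z w),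
      ccomp (ccomp f g) h = ccomp f (ccomp g h);
  cidl : forall x y (f : chom x y), ccomp (cid x) f = f;
  cidr : forall x y (f : chom x y), ccomp f (cid y) = f
}.

Record Functor (C D : Cat) := {
  fo : cob C -> cob D;
  fm : forall {x y}, chom C x y -> chom D (fo x) (fo y);
  fm_id : forall x, fm (cid C x) = cid D (fo x);
  fm_comp : forall x y z (f : chom C x y) (g : chom C y z),
      fm (ccomp C f g) = ccomp D (fm f) (fm g)
}.

Arguments fo {C D} _ _.
Arguments fm {C D} _ {x y} _.

Record Arr (C : Cat) := mkArr { a_s : cob C; a_t : cob C; a_m : chom C a_s a_t }.
Arguments mkArr {C a_s a_t} _.
Arguments a_m {C} _.

Definition mapA {C D} (F : Functor C D) (f : Arr C) : Arr D := mkArr (fm F (a_m f)).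

Definition fcomm {X Y Y' Z} (F : Functor X Y) (G : Functor Y Z)
    (H : Functor X Y') (K : Functor Y' Z) : Prop :=
  (forall x, fo G (fo F x) = fo K (fo H x)) /\
  (forall f, mapA G (mapA F f) = mapA K (mapA H f)).

Definition ftri {X Y Z} (F : Functor X Y) (G : Functor Y Z) (H : Functor X Z) : Prop :=
  (forall x, fo G (fo F x) = fo H x) /\
  (forall f, mapA G (mapA F f) = mapA H f).

Definition fLLP {A B} (i : Functor A B) (P : forall C D : Cat, Functor C D -> Prop) : Prop :=
  forall (C D : Cat) (p : Functor C D), P C D p ->
  forall (u : Functor A C) (v : Functor B D), fcomm u p i v ->
  exists d : Functor B C, ftri i d u /\ ftri d p v.

Definition surj_obj_full (C D : Cat) (p : Functor C D) : Prop :=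
  (forall y, exists x, fo p x = y) /\
  (forall x x' (g : chom D (fo p x) (fo p x')), exists f : chom C x x', fm p f = g).

Definition surj_obj_mor (C D : Cat) (p : Functor C D) : Prop :=
  (forall y, exists x, fo p x = y) /\
  (forall g : Arr D, exists f : Arr C, mapA p f = g).

Definition UH (X : DblCat) : Cat :=
  {| cob := dob X; chom := hom_h X; cid := hid X; ccomp := @hcomp X;
     cassoc := hassoc X; cidl := hidl X; cidr := hidr X |}.
Definition UV (X : DblCat) : Cat :=
  {| cob := dob X; chom := hom_v X; cid := vid X; ccomp := @vcomp X;
     cassoc := vassoc X; cidl := vidl X; cidr := vidr X |}.

Definition UHF {X Y} (F : DblFunctor X Y) : Functor (UH X) (UH Y) :=
  @Build_Functor (UH X) (UH Y) (F0 F) (fun A B a => Fh F a)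
    (Fh_id X Y F) (Fh_comp X Y F).
Definition UVF {X Y} (F : DblFunctor X Y) : Functor (UV X) (UV Y) :=
  @Build_Functor (UV X) (UV Y) (F0 F) (fun A B u => Fv F u)
    (Fv_id X Y F) (Fv_comp X Y F).

(* Main.v *)
Require Import Defs.
From Stdlib Require Import Program.Equality IndefiniteDescription.

Lemma unit_eq (x y : unit) : x = y.
Proof. destruct x, y; reflexivity. Qed.

Definition RH (C : Cat) : DblCat.
Proof.
refine {| dob := cob C; hom_h := chom C; hom_v := fun _ _ => unit;
  sq := fun _ _ _ _ _ _ _ _ => unit; hid := cid C; hcomp := @ccomp C;
  vid := fun _ => tt; vcomp := fun _ _ _ _ _ => tt; hcompS := _; vcompS := _;
  idH := _; idV := _; hassoc := cassoc C; hidl := cidl C; hidr := cidr C;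
  vassoc := _; vidl := _; vidr := _; hassocS := _; hidlS := _; hidrS := _;
  vassocS := _; vidlS := _; vidrS := _; interchange := _; idH_hcomp := _;
  idV_vcomp := _; idV_vid := _ |}. Unshelve. all: intros; first [exact tt | apply unit_eq].
Defined.

Definition RV (C : Cat) : DblCat.
Proof.
refine {| dob := cob C; hom_h := fun _ _ => unit; hom_v := chom C;
  sq := fun _ _ _ _ _ _ _ _ => unit; vid := cid C; vcomp := @ccomp C;
  hid := fun _ => tt; hcomp := fun _ _ _ _ _ => tt; hcompS := _; vcompS := _;
  idH := _; idV := _; vassoc := cassoc C; vidl := cidl C; vidr := cidr C;
  hassoc := _; hidl := _; hidr := _; hassocS := _; hidlS := _; hidrS := _;
  vassocS := _; vidlS := _; vidrS := _; interchange := _; idH_hcomp := _;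
  idV_vcomp := _; idV_vid := _ |}. Unshelve. all: intros; first [exact tt | apply unit_eq].
Defined.

Definition liftH {X : DblCat} {C : Cat} (G : Functor (UH X) C) : DblFunctor X (RH C).
Proof.
refine {| F0 := (fo G : dob X -> dob (RH C)); Fh := fun _ _ a => fm G a; Fv := fun _ _ _ => tt;
  Fs := fun _ _ _ _ _ _ _ _ _ => tt; Fh_id := fm_id _ _ G; Fh_comp := fm_comp _ _ G;
  Fv_id := _; Fv_comp := _; Fs_hcomp := _; Fs_vcomp := _; Fs_idH := _; Fs_idV := _ |};
  try (intros; apply unit_eq). Unshelve. all: intros; first [exact tt | apply unit_eq].
Defined.

Definition liftV {X : DblCat} {C : Cat} (G : Functor (UV X) C) : DblFunctor X (RV C).
Proof.
refine {| F0 := (fo G : dob X -> dob (RV C)); Fv := fun _ _ a => fm G a; Fh := fun _ _ _ => tt;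
  Fs := fun _ _ _ _ _ _ _ _ _ => tt; Fv_id := fm_id _ _ G; Fv_comp := fm_comp _ _ G;
  Fh_id := _; Fh_comp := _; Fs_hcomp := _; Fs_vcomp := _; Fs_idH := _; Fs_idV := _ |};
  try (intros; apply unit_eq). Unshelve. all: intros; first [exact tt | apply unit_eq].
Defined.

Definition liftHP {C D : Cat} (p : Functor C D) : DblFunctor (RH C) (RH D).
Proof.
refine {| F0 := (fo p : dob (RH C) -> dob (RH D)); Fh := fun _ _ a => fm p a; Fv := fun _ _ _ => tt;
  Fs := fun _ _ _ _ _ _ _ _ _ => tt; Fh_id := fm_id _ _ p; Fh_comp := fm_comp _ _ p;
  Fv_id := _; Fv_comp := _; Fs_hcomp := _; Fs_vcomp := _; Fs_idH := _; Fs_idV := _ |};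
  try (intros; apply unit_eq). Unshelve. all: intros; first [exact tt | apply unit_eq].
Defined.

Definition liftVP {C D : Cat} (p : Functor C D) : DblFunctor (RV C) (RV D).
Proof.
refine {| F0 := (fo p : dob (RV C) -> dob (RV D)); Fv := fun _ _ a => fm p a; Fh := fun _ _ _ => tt;
  Fs := fun _ _ _ _ _ _ _ _ _ => tt; Fv_id := fm_id _ _ p; Fv_comp := fm_comp _ _ p;
  Fh_id := _; Fh_comp := _; Fs_hcomp := _; Fs_vcomp := _; Fs_idH := _; Fs_idV := _ |};
  try (intros; apply unit_eq). Unshelve. all: intros; first [exact tt | apply unit_eq].
Defined.

Definition toHR {C : Cat} (g : Arr C) : HArr (RH C) := @mkHArr (RH C) (a_s _ g) (a_t _ g) (a_m g).
Definition ofHR {C : Cat} (h : HArr (RH C)) : Arr C := @mkArr C (ha_s _ h) (ha_t _ h) (ha_m h).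
Definition toVR {C : Cat} (g : Arr C) : VArr (RV C) := @mkVArr (RV C) (a_s _ g) (a_t _ g) (a_m g).
Definition ofVR {C : Cat} (h : VArr (RV C)) : Arr C := @mkArr C (va_s _ h) (va_t _ h) (va_m h).

Lemma RH_sq_eq (C : Cat) A B C' D A2 B2 C2 D2 (a : chom C A B) (c : chom C C' D)
  (a2 : chom C A2 B2) (c2 : chom C C2 D2) :
  mkArr a = mkArr a2 -> mkArr c = mkArr c2 ->
  @mkSqArr (RH C) A B C' D tt tt a c tt = @mkSqArr (RH C) A2 B2 C2 D2 tt tt a2 c2 tt.
Proof. intros H1 H2. dependent destruction H1. dependent destruction H2. reflexivity. Qed.

Lemma RV_sq_eq (C : Cat) A B C' D A2 B2 C2 D2 (a : chom C A C') (c : chom C B D)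
  (a2 : chom C A2 C2) (c2 : chom C B2 D2) :
  mkArr a = mkArr a2 -> mkArr c = mkArr c2 ->
  @mkSqArr (RV C) A B C' D a c tt tt tt = @mkSqArr (RV C) A2 B2 C2 D2 a2 c2 tt tt tt.
Proof. intros H1 H2. dependent destruction H1. dependent destruction H2. reflexivity. Qed.

Lemma forward_H (A B : DblCat) (F : DblFunctor A B) :
  dcofibration F -> fLLP (UHF F) surj_obj_full.
Proof.
intros Hcof C D p [Ps Pf] u v [c0 c1].
destruct (Hcof (RH C) (RH D) (liftHP p)) with (u := liftH u) (v := liftH v)
  as [d [Hd1 Hd2]].
- split; [exact Ps|]. split; [exact Pf|]. split.
  + intros [s t m]. destruct (Ps s) as [x ex]. destruct (Ps t) as [y ey].
    exists (@mkVArr (RH C) x y tt). subst s t. destruct m. reflexivity.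
  + intros. exists tt. split; [apply unit_eq|]. intros; apply unit_eq.
- split; [exact c0|]. split; [|split].
  + intros [s t m]. exact (f_equal toHR (c1 (@mkArr (UH A) s t m))).
  + intros [s t m]. change (@mkVArr (RH D) (fo p (fo u s)) (fo p (fo u t)) tt = @mkVArr (RH D) (fo v (F0 F s)) (fo v (F0 F t)) tt). rewrite !c0. reflexivity.
  + intros [sA sB sC sD su su' sa sc ss]. cbn.
    exact (RH_sq_eq D _ _ _ _ _ _ _ _ _ _ _ _ (c1 (@mkArr (UH A) _ _ sa)) (c1 (@mkArr (UH A) _ _ sc))).
- exists (Build_Functor (UH B) C (F0 d) (fun _ _ a => Fh d a) (Fh_id _ _ d) (Fh_comp _ _ d)).
  split; split.
  + exact (proj1 Hd1).
  + intros [s t m]. exact (f_equal ofHR (proj1 (proj2 Hd1) (mkHArr m))).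
  + exact (proj1 Hd2).
  + intros [s t m]. exact (f_equal ofHR (proj1 (proj2 Hd2) (mkHArr m))).
Qed.

Lemma forward_V (A B : DblCat) (F : DblFunctor A B) :
  dcofibration F -> fLLP (UVF F) surj_obj_mor.
Proof.
intros Hcof C D p [Ps Pm] u v [c0 c1].
destruct (Hcof (RV C) (RV D) (liftVP p)) with (u := liftV u) (v := liftV v)
  as [d [Hd1 Hd2]].
- split; [exact Ps|]. split; [|split].
  + intros. exists tt. apply unit_eq.
  + intros [s t m]. destruct (Pm (@mkArr D s t m)) as [f Hf].
    exists (toVR f). destruct f. exact (f_equal toVR Hf).
  + intros. exists tt. split; [apply unit_eq|]. intros; apply unit_eq.
- split; [exact c0|]. split; [|split].
  + intros [s t m]. change (@mkHArr (RV D) (fo p (fo u s)) (fo p (fo u t)) tt = @mkHArr (RV D) (fo v (F0 F s)) (fo v (F0 F t)) tt). rewrite !c0. reflexivity.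
  + intros [s t m]. exact (f_equal toVR (c1 (@mkArr (UV A) s t m))).
  + intros [sA sB sC sD su su' sa sc ss]. cbn.
    exact (RV_sq_eq D _ _ _ _ _ _ _ _ _ _ _ _ (c1 (@mkArr (UV A) _ _ su)) (c1 (@mkArr (UV A) _ _ su'))).
- exists (Build_Functor (UV B) C (F0 d) (fun _ _ a => Fv d a) (Fv_id _ _ d) (Fv_comp _ _ d)).
  split; split.
  + exact (proj1 Hd1).
  + intros [s t m]. exact (f_equal ofVR (proj1 (proj2 (proj2 Hd1)) (mkVArr m))).
  + exact (proj1 Hd2).
  + intros [s t m]. exact (f_equal ofVR (proj1 (proj2 (proj2 Hd2)) (mkVArr m))).
Qed.

Definition chcast (C : Cat) {x x' y y'} (e : x = x') (e' : y = y') (f : chom C x y) : chom C x' y' :=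
  match e in _ = a return chom C a y' with eq_refl =>
  match e' in _ = b return chom C x b with eq_refl => f end end.

Lemma chcast_id (C : Cat) x x' (e : x = x') : chcast C e e (cid C x) = cid C x'.
Proof. destruct e; reflexivity. Qed.

Lemma chcast_comp (C : Cat) x x' y y' z z' (e1 : x = x') (e2 : y = y') (e3 : z = z')
  (f : chom C x y) (g : chom C y z) :
  chcast C e1 e3 (ccomp C f g) = ccomp C (chcast C e1 e2 f) (chcast C e2 e3 g).
Proof. destruct e1, e2, e3; reflexivity. Qed.

Lemma chcast_arr (C : Cat) x x' y y' (e : x = x') (e' : y = y') (f : chom C x y) :
  mkArr (chcast C e e' f) = mkArr f.
Proof. destruct e, e'; reflexivity. Qed.

Lemma key_cast {X Y : Cat} (Fn : Functor X Y) x1 y1 x2 y2 z w (f : chom X x1 y1)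
  (g : chom Y x2 y2) (e1 : x1 = z) (e2 : y1 = w) (e3 : x2 = fo Fn z) (e4 : y2 = fo Fn w) :
  mkArr (fm Fn f) = mkArr g -> fm Fn (chcast X e1 e2 f) = chcast Y e3 e4 g.
Proof.
subst z w. cbn. subst x2 y2. cbn. intros H. dependent destruction H. reflexivity.
Qed.

Definition reobj {X Y : Cat} (Fn : Functor X Y) (o : cob X -> cob Y)
  (E : forall x, fo Fn x = o x) : Functor X Y.
Proof.
refine (Build_Functor X Y o (fun x y m => chcast Y (E x) (E y) (fm Fn m)) _ _).
- intros x. rewrite fm_id. apply chcast_id.
- intros x y z f g. rewrite fm_comp. apply chcast_comp.
Defined.

Lemma reobj_arr {X Y : Cat} (Fn : Functor X Y) o E f : mapA (reobj Fn o E) f = mapA Fn f.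
Proof. destruct f. apply chcast_arr. Qed.

Definition Pull (C : Cat) (I : Type) (o : I -> cob C) : Cat :=
  {| cob := I; chom := fun i j => chom C (o i) (o j); cid := fun i => cid C (o i);
     ccomp := fun i j k f g => ccomp C f g;
     cassoc := fun i j k l f g h => cassoc C _ _ _ _ f g h;
     cidl := fun i j f => cidl C _ _ f; cidr := fun i j f => cidr C _ _ f |}.

Definition intoPull {X C : Cat} (I : Type) (o : I -> cob C) (Fn : Functor X C)
  (f0 : cob X -> I) (E : forall x, fo Fn x = o (f0 x)) : Functor X (Pull C I o).
Proof.
refine (Build_Functor X (Pull C I o) f0 (fun x y m => chcast C (E x) (E y) (fm Fn m)) _ _).
- intros x. cbn. rewrite fm_id. apply chcast_id.
- intros x y z f g. cbn. rewrite fm_comp. apply chcast_comp.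
Defined.

Definition forgetPull (C : Cat) (I : Type) (o : I -> cob C) : Functor (Pull C I o) C :=
  Build_Functor (Pull C I o) C o (fun i j f => f) (fun _ => eq_refl) (fun _ _ _ _ _ => eq_refl).

Definition pullMap {C D : Cat} (P : Functor C D) (I : Type) (o : I -> cob C) :
  Functor (Pull C I o) (Pull D I (fun i => fo P (o i))) :=
  Build_Functor (Pull C I o) (Pull D I (fun i => fo P (o i))) (fun i => i)
    (fun i j f => fm P f) (fun i => fm_id _ _ P (o i))
    (fun i j k f g => fm_comp _ _ P _ _ _ f g).

Definition fcomp {X Y Z : Cat} (F : Functor X Y) (G : Functor Y Z) : Functor X Z.
Proof.
refine (Build_Functor X Z (fun x => fo G (fo F x)) (fun x y m => fm G (fm F m)) _ _).
- intros. rewrite !fm_id. reflexivity.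
- intros. rewrite !fm_comp. reflexivity.
Defined.

Definition atoH {X : DblCat} (g : Arr (UH X)) : HArr X := @mkHArr X (a_s _ g) (a_t _ g) (a_m g).
Definition atoV {X : DblCat} (g : Arr (UV X)) : VArr X := @mkVArr X (a_s _ g) (a_t _ g) (a_m g).

Lemma sq_inj (X : DblCat) A B C D (u : hom_v X A C) (u' : hom_v X B D) a c (s t : sq X u u' a c) :
  mkSqArr s = mkSqArr t -> s = t.
Proof. intros H. dependent destruction H. reflexivity. Qed.

Lemma sqcast_arr (X : DblCat) A B C D (u u1 : hom_v X A C) (u' u1' : hom_v X B D)
  (a a1 : hom_h X A B) (c c1 : hom_h X C D) (e1 : u = u1) (e2 : u' = u1') (e3 : a = a1)
  (e4 : c = c1) (s : sq X u u' a c) :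
  mkSqArr (sq_cast (@sq X) e1 e2 e3 e4 s) = mkSqArr s.
Proof. destruct e1, e2, e3, e4. reflexivity. Qed.

Lemma Fs_sqcast {X Y : DblCat} (G : DblFunctor X Y) A B C D (u u1 : hom_v X A C) (u' u1' : hom_v X B D)
  (a a1 : hom_h X A B) (c c1 : hom_h X C D) (e1 : u = u1) (e2 : u' = u1') (e3 : a = a1)
  (e4 : c = c1) (s : sq X u u' a c) :
  mkSqArr (Fs G (sq_cast (@sq X) e1 e2 e3 e4 s)) = mkSqArr (Fs G s).
Proof. destruct e1, e2, e3, e4. reflexivity. Qed.

Lemma hc_cong (X : DblCat) A B C D E F (u : hom_v X A D) (u' : hom_v X B E) (u'' : hom_v X C F) a b c d
  A2 B2 C2 D2 E2 F2 (w : hom_v X A2 D2) (w' : hom_v X B2 E2) (w'' : hom_v X C2 F2) a2 b2 c2 d2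
  (x1 : sq X u u' a c) (x2 : sq X u' u'' b d) (y1 : sq X w w' a2 c2) (y2 : sq X w' w'' b2 d2) :
  mkSqArr x1 = mkSqArr y1 -> mkSqArr x2 = mkSqArr y2 -> mkSqArr (hcompS X x1 x2) = mkSqArr (hcompS X y1 y2).
Proof. intros H1 H2. dependent destruction H1. dependent destruction H2. reflexivity. Qed.

Lemma vc_cong (X : DblCat) A B C D E F (u : hom_v X A C) (u' : hom_v X B D) (v : hom_v X C E)
  (v' : hom_v X D F) (a : hom_h X A B) (c : hom_h X C D) (e : hom_h X E F)
  A2 B2 C2 D2 E2 F2 (u2 : hom_v X A2 C2) (u2' : hom_v X B2 D2) (v2 : hom_v X C2 E2)
  (v2' : hom_v X D2 F2) (a2 : hom_h X A2 B2) (c2 : hom_h X C2 D2) (e2 : hom_h X E2 F2)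
  (x1 : sq X u u' a c) (x2 : sq X v v' c e) (y1 : sq X u2 u2' a2 c2) (y2 : sq X v2 v2' c2 e2) :
  mkSqArr x1 = mkSqArr y1 -> mkSqArr x2 = mkSqArr y2 -> mkSqArr (vcompS X x1 x2) = mkSqArr (vcompS X y1 y2).
Proof. intros H1 H2. dependent destruction H1. dependent destruction H2. reflexivity. Qed.

Lemma idH_cong (X : DblCat) A B A2 B2 (a : hom_h X A B) (b : hom_h X A2 B2) :
  mkHArr a = mkHArr b -> mkSqArr (idH X a) = mkSqArr (idH X b).
Proof. intros H. dependent destruction H. reflexivity. Qed.

Lemma idV_cong (X : DblCat) A B A2 B2 (a : hom_v X A B) (b : hom_v X A2 B2) :
  mkVArr a = mkVArr b -> mkSqArr (idV X a) = mkSqArr (idV X b).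
Proof. intros H. dependent destruction H. reflexivity. Qed.

Lemma Fs_hcomp_arr {X Y : DblCat} (G : DblFunctor X Y) A B C D E F (u : hom_v X A D)
  (u' : hom_v X B E) (u'' : hom_v X C F) (a : hom_h X A B) (b : hom_h X B C)
  (c : hom_h X D E) (d : hom_h X E F) (al : sq X u u' a c) (be : sq X u' u'' b d) :
  mkSqArr (Fs G (hcompS X al be)) = mkSqArr (hcompS Y (Fs G al) (Fs G be)).
Proof. rewrite <- (Fs_hcomp _ _ G). symmetry. apply sqcast_arr. Qed.

Lemma Fs_vcomp_arr {X Y : DblCat} (G : DblFunctor X Y) A B C D E F (u : hom_v X A C)
  (u' : hom_v X B D) (v : hom_v X C E) (v' : hom_v X D F) (a : hom_h X A B)
  (c : hom_h X C D) (e : hom_h X E F) (al : sq X u u' a c) (be : sq X v v' c e) :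
  mkSqArr (Fs G (vcompS X al be)) = mkSqArr (vcompS Y (Fs G al) (Fs G be)).
Proof. rewrite <- (Fs_vcomp _ _ G). symmetry. apply sqcast_arr. Qed.

Lemma Fs_idH_arr {X Y : DblCat} (G : DblFunctor X Y) A B (a : hom_h X A B) :
  mkSqArr (Fs G (idH X a)) = mkSqArr (idH Y (Fh G a)).
Proof. rewrite <- (Fs_idH _ _ G). symmetry. apply sqcast_arr. Qed.

Lemma Fs_idV_arr {X Y : DblCat} (G : DblFunctor X Y) A B (a : hom_v X A B) :
  mkSqArr (Fs G (idV X a)) = mkSqArr (idV Y (Fv G a)).
Proof. rewrite <- (Fs_idV _ _ G). symmetry. apply sqcast_arr. Qed.

Lemma sq_transport (X : DblCat) (S : SqArr X) A B C D (u : hom_v X A C) (u' : hom_v X B D)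
  (a : hom_h X A B) (c : hom_h X C D) :
  mkVArr u = mkVArr (s_u _ S) -> mkVArr u' = mkVArr (s_u' _ S) ->
  mkHArr a = mkHArr (s_a _ S) -> mkHArr c = mkHArr (s_c _ S) ->
  exists be : sq X u u' a c, mkSqArr be = S.
Proof.
destruct S as [sA sB sC sD su su' sa sc ss]. cbn. intros H1 H2 H3 H4.
dependent destruction H1. dependent destruction H2. dependent destruction H3.
dependent destruction H4. exists ss. reflexivity.
Qed.

Definition sqcond {C D : DblCat} (P : DblFunctor C D) : Prop :=
  forall (A B0 C' D0 : dob C) (u : hom_v C A C') (u' : hom_v C B0 D0)
      (a : hom_h C A B0) (c : hom_h C C' D0)
      (be : sq D (Fv P u) (Fv P u') (Fh P a) (Fh P c)),
      exists al : sq C u u' a c, Fs P al = be /\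
        forall al' : sq C u u' a c, Fs P al' = be -> al' = al.

Lemma sq_uniq {C D : DblCat} (P : DblFunctor C D) (Psq : sqcond P) A B C' D' (u : hom_v C A C')
  (u' : hom_v C B D') a c (x y : sq C u u' a c) :
  mkSqArr (Fs P x) = mkSqArr (Fs P y) -> x = y.
Proof.
intro H. apply sq_inj in H. destruct (Psq _ _ _ _ u u' a c (Fs P x)) as [al [_ Hu]].
rewrite (Hu x eq_refl), (Hu y (eq_sym H)). reflexivity.
Qed.

Lemma sq_faith {C D : DblCat} (P : DblFunctor C D) (Psq : sqcond P) A B C' D' (u : hom_v C A C')
  (u' : hom_v C B D') a c A2 B2 C2 D2 (w : hom_v C A2 C2) (w' : hom_v C B2 D2) b e
  (x : sq C u u' a c) (y : sq C w w' b e) :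
  mkVArr u = mkVArr w -> mkVArr u' = mkVArr w' -> mkHArr a = mkHArr b -> mkHArr c = mkHArr e ->
  mkSqArr (Fs P x) = mkSqArr (Fs P y) -> mkSqArr x = mkSqArr y.
Proof.
intros H1 H2 H3 H4. dependent destruction H1. dependent destruction H2. dependent destruction H3.
dependent destruction H4. intro H. rewrite (sq_uniq P Psq _ _ _ _ _ _ _ _ x y H). reflexivity.
Qed.

Lemma backward_build (A B C D : DblCat) (F : DblFunctor A B) (P : DblFunctor C D)
  (u : DblFunctor A C) (v : DblFunctor B D) (Psq : sqcond P) (Hc : dcomm u P F v)
  (dh : Functor (UH B) (UH C)) (dv : Functor (UV B) (UV C)) (E : forall y, fo dh y = fo dv y)
  (hA : forall h, mapA dh (mapA (UHF F) h) = mapA (UHF u) h)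
  (hB : forall g, mapA (UHF P) (mapA dh g) = mapA (UHF v) g)
  (vA : ftri (UVF F) dv (UVF u)) (vB : ftri dv (UVF P) (UVF v)) :
  exists d, dtri F d u /\ dtri d P v.
Proof.
set (dh' := reobj dh (fo dv) E).
assert (hA' : forall h, mapA dh' (mapA (UHF F) h) = mapA (UHF u) h)
  by (intro; unfold dh'; rewrite reobj_arr; apply hA).
assert (hB' : forall g, mapA (UHF P) (mapA dh' g) = mapA (UHF v) g).
{ intro g. unfold dh'. rewrite reobj_arr. apply hB. }
assert (HB_h : forall y y' (b : hom_h B y y'), mkHArr (Fh P (fm dh' b)) = mkHArr (Fh v b))
  by (intros; exact (f_equal atoH (hB' (@mkArr (UH B) _ _ b)))).
assert (HB_v : forall y y' (b : hom_v B y y'), mkVArr (Fv P (fm dv b)) = mkVArr (Fv v b))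
  by (intros; exact (f_equal atoV (proj2 vB (@mkArr (UV B) _ _ b)))).
assert (Hex : forall A0 B0 C0 D0 (uu : hom_v B A0 C0) (uu' : hom_v B B0 D0) (a : hom_h B A0 B0)
   (c : hom_h B C0 D0) (s : sq B uu uu' a c),
   exists al : sq C (fm dv uu) (fm dv uu') (fm dh' a) (fm dh' c),
     mkSqArr (Fs P al) = mkSqArr (Fs v s)).
{ intros. destruct (sq_transport D (mkSqArr (Fs v s)) _ _ _ _ (Fv P (fm dv uu)) (Fv P (fm dv uu'))
    (Fh P (fm dh' a)) (Fh P (fm dh' c)) (HB_v _ _ _) (HB_v _ _ _) (HB_h _ _ _) (HB_h _ _ _))
    as [be Hbe].
  destruct (Psq _ _ _ _ _ _ _ _ be) as [al [Hal _]]. exists al. rewrite Hal. exact Hbe. }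
pose (dFs := fun A0 B0 C0 D0 uu uu' a c s =>
  proj1_sig (constructive_indefinite_description _ (Hex A0 B0 C0 D0 uu uu' a c s))).
assert (dFs_spec : forall A0 B0 C0 D0 uu uu' a c s,
  mkSqArr (Fs P (dFs A0 B0 C0 D0 uu uu' a c s)) = mkSqArr (Fs v s)).
{ intros. unfold dFs. exact (proj2_sig (constructive_indefinite_description _ (Hex A0 B0 C0 D0 uu uu' a c s))). }
clearbody dFs.
assert (Uq := sq_uniq P Psq).
unshelve refine (ex_intro _ {| F0 := (fo dv : dob B -> dob C); Fh := fun _ _ a => fm dh' a;
  Fv := fun _ _ uu => fm dv uu; Fs := dFs; Fh_id := fm_id _ _ dh'; Fh_comp := fm_comp _ _ dh';
  Fv_id := fm_id _ _ dv; Fv_comp := fm_comp _ _ dv; Fs_hcomp := _; Fs_vcomp := _;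
  Fs_idH := _; Fs_idV := _ |} _).
all: cbn beta.
- intros. apply Uq. rewrite Fs_sqcast, dFs_spec, !Fs_hcomp_arr.
  apply hc_cong; symmetry; apply dFs_spec.
- intros. apply Uq. rewrite Fs_sqcast, dFs_spec, !Fs_vcomp_arr.
  apply vc_cong; symmetry; apply dFs_spec.
- intros. apply Uq. rewrite Fs_sqcast, dFs_spec, !Fs_idH_arr.
  apply idH_cong; symmetry; apply HB_h.
- intros. apply Uq. rewrite Fs_sqcast, dFs_spec, !Fs_idV_arr.
  apply idV_cong; symmetry; apply HB_v.
- destruct Hc as [Hc1 [Hc2 [Hc3 Hc4]]].
  split; split; [| split; [| split] | | split; [| split]].
  + intro x. exact (proj1 vA x).
  + intros [s t m]. exact (f_equal atoH (hA' (@mkArr (UH A) s t m))).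
  + intros [s t m]. exact (f_equal atoV (proj2 vA (@mkArr (UV A) s t m))).
  + intros [sA sB sC sD su su' sa sc ss]. unfold mapS; cbn.
    apply (sq_faith P Psq).
    * exact (f_equal atoV (proj2 vA (@mkArr (UV A) _ _ su))).
    * exact (f_equal atoV (proj2 vA (@mkArr (UV A) _ _ su'))).
    * exact (f_equal atoH (hA' (@mkArr (UH A) _ _ sa))).
    * exact (f_equal atoH (hA' (@mkArr (UH A) _ _ sc))).
    * etransitivity; [exact (dFs_spec _ _ _ _ _ _ _ _ (Fs F ss))|]. exact (eq_sym (Hc4 (mkSqArr ss))).
  + intro x. exact (proj1 vB x).
  + intros [s t m]. exact (f_equal atoH (hB' (@mkArr (UH B) s t m))).
  + intros [s t m]. exact (f_equal atoV (proj2 vB (@mkArr (UV B) s t m))).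
  + intros [sA sB sC sD su su' sa sc ss]. exact (dFs_spec _ _ _ _ _ _ _ _ ss).
Qed.

Definition vtoA {X : DblCat} (h : VArr X) : Arr (UV X) := @mkArr (UV X) (va_s _ h) (va_t _ h) (va_m h).
Definition htoA {X : DblCat} (h : HArr X) : Arr (UH X) := @mkArr (UH X) (ha_s _ h) (ha_t _ h) (ha_m h).

Lemma backward (A B : DblCat) (F : DblFunctor A B) :
  fLLP (UHF F) surj_obj_full -> fLLP (UVF F) surj_obj_mor -> dcofibration F.
Proof.
intros H1 H2 C D P [Pobj [Pfull [Pv Psq]]] u v Hc.
pose proof Hc as Hc'. destruct Hc' as [c0 [ch [cv cs]]].
destruct (H2 (UV C) (UV D) (UVF P)) with (u := UVF u) (v := UVF v) as [dv [vA vB]].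
- split; [exact Pobj|]. intros [s t m]. destruct (Pv (@mkVArr D s t m)) as [[x y w] Hw].
  exists (@mkArr (UV C) x y w). exact (f_equal vtoA Hw).
- split; [exact c0|]. intros [s t m]. exact (f_equal vtoA (cv (@mkVArr A s t m))).
- set (o := (fo dv : dob B -> dob C)).
  assert (Eo1 : forall a, o (F0 F a) = F0 u a) by exact (proj1 vA).
  assert (Eo2 : forall y, F0 P (o y) = F0 v y) by exact (proj1 vB).
  set (q := pullMap (UHF P) (dob B) o).
  set (u' := @intoPull (UH A) (UH C) (dob B) o (UHF u) (F0 F) (fun a => eq_sym (Eo1 a))).
  set (v' := @intoPull (UH B) (UH D) (dob B) (fun y => fo (UHF P) (o y)) (UHF v) (fun y => y) (fun y => eq_sym (Eo2 y))).
  destruct (H1 _ _ q) with (u := u') (v := v') as [d' [Hd1 Hd2]].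
  + split. { intro y; exists y; reflexivity. } intros x x' g. exact (Pfull (o x) (o x') g).
  + split. { intro a; reflexivity. } intros [s t m].
    apply (f_equal (@mkArr (Pull (UH D) (dob B) (fun y => fo (UHF P) (o y))) (F0 F s) (F0 F t))).
    refine (key_cast (UHF P) _ _ _ _ _ _ (fm (UHF u) m) (fm (UHF v) (fm (UHF F) m)) _ _ _ _ _).
    exact (f_equal htoA (ch (@mkHArr A s t m))).
  + assert (Ed : forall y, fo d' y = y) by exact (proj1 Hd2).
    set (dh := fcomp d' (forgetPull (UH C) (dob B) o)).
    assert (E : forall y, fo dh y = fo dv y) by (intro y; exact (f_equal o (Ed y))).
    apply (backward_build A B C D F P u v Psq Hc dh dv E); [| | exact vA | exact vB].
    * intros [s t m].
      change (mapA (forgetPull (UH C) (dob B) o) (mapA d' (mapA (UHF F) (@mkArr (UH A) s t m))) = mapA (UHF u) (@mkArr (UH A) s t m)).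
      rewrite (proj2 Hd1). exact (chcast_arr _ _ _ _ _ _ _ _).
    * intros [s t m].
      change (mapA (forgetPull (UH D) (dob B) (fun y => fo (UHF P) (o y))) (mapA q (mapA d' (@mkArr (UH B) s t m))) = mapA (UHF v) (@mkArr (UH B) s t m)).
      rewrite (proj2 Hd2). exact (chcast_arr _ _ _ _ _ _ _ _).
Qed.

Theorem proposition4p7 (A B : DblCat) (F : DblFunctor A B) :
  dcofibration F <->
  (fLLP (UHF F) surj_obj_full /\ fLLP (UVF F) surj_obj_mor).
Proof.
split.
- intro H. split; [exact (forward_H A B F H) | exact (forward_V A B F H)].
- intros [H1 H2]. exact (backward A B F H1 H2).
Qed.
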